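(* Let $P$ be a finite set of points in the plane such that no two points of $P$ lie on a line parallel to a boundary ray of the cones (i.e. to a line making angle a multiple of $\pi/3$ with the positive $x$-axis), and let $G$ be the half-$\theta_6$-graph of $P$. Let $u,w\in P$ with $w$ in a positive cone of $u$. Let $m$ be the midpoint of the side of the canonical triangle $T_{uw}$ opposite $u$, and let $\alpha$ be the unsigned angle between the segments $uw$ and $um$. Then there exists a path between $u$ and $w$ in $G$ of length at most $$(\sqrt{3}\cos\alpha+\sin\alpha)\cdot|uw|,$$ all of whose vertices lie in $T_{uw}$.
   Context: Cones: for a point $u$, the plane is partitioned into six cones with apex $u$, bounded by the rays from $u$ at angles $j\pi/3$ ($j=0,\dots,5$) from the positive $x$-axis. In counterclockwise order starting from the positive $x$-axis they are labelled $\overline{C}_1, C_0, \overline{C}_2, C_1, \overline{C}_0, C_2$; the cones $C_0,C_1,C_2$ are called positive and $\overline{C}_0,\overline{C}_1,\overline{C}_2$ negative. Half-$\theta_6$-graph: for each point $u\in P$ and each positive cone $C$ of $u$ containing points of $P\setminus\{u\}$, add an edge from $u$ to the point of $P$ in $C$ whose orthogonal projection onto the bisector of $C$ is closest to $u$; edges are straight segments weighted by Euclidean length $|\cdot|$. Canonical triangle: if $v$ lies in a positive cone $C$ of $u$, $T_{uv}$ is the triangle bounded by the two boundary rays of $C$ and the line through $v$ perpendicular to the bisector of $C$ (an equilateral triangle with apex $u$). For every pair of points exactly one of $T_{uv}$, $T_{vu}$ is defined, and $uv$ is an edge iff its canonical triangle contains no other point of $P$. The length of a path is the sum of the Euclidean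 lengths of its edges. *)

(* Defs.v *)
From Stdlib Require Import Reals List.
Open Scope R_scope.

Definition pt : Type := (R * R)%type.

Definition dot (a b : pt) : R := fst a * fst b + snd a * snd b.
Definition vsub (a b : pt) : pt := (fst a - fst b, snd a - snd b).
Definition vadd (a b : pt) : pt := (fst a + fst b, snd a + snd b).
Definition vscale (k : R) (a : pt) : pt := (k * fst a, k * snd a).
Definition dir (t : R) : pt := (cos t, sin t).
Definition norm (a : pt) : R := sqrt (dot a a).
Definition edist (a b : pt) : R := norm (vsub b a).

(* General position: no two points of P on a line making angle j*PI/3
   (j = 0,1,2 suffices, the others being the same lines) with the x-axis. *)
Definition general_position (P : list pt) : Prop :=
  forall p q, In p P -> In q P -> p <> q ->
    forall j : nat, (j < 3)%nat ->
      (fst q - fst p) * sin (INR j * PI / 3)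
      - (snd q - snd p) * cos (INR j * PI / 3) <> 0.

Definition cone_lo (i : nat) : R := PI / 3 + INR i * (2 * PI / 3).
Definition cone_hi (i : nat) : R := 2 * PI / 3 + INR i * (2 * PI / 3).
Definition cone_bis (i : nat) : R := PI / 2 + INR i * (2 * PI / 3).

Definition in_pos_cone (i : nat) (u v : pt) : Prop :=
  (i < 3)%nat /\
  exists r t, 0 < r /\ cone_lo i < t < cone_hi i /\
              v = vadd u (vscale r (dir t)).

Definition proj (i : nat) (u v : pt) : R := dot (vsub v u) (dir (cone_bis i)).

Definition half_theta6_arc (P : list pt) (u v : pt) : Prop :=
  In u P /\ In v P /\
  exists i, in_pos_cone i u v /\
    forall x, In x P -> x <> u -> in_pos_cone i u x -> proj i u v <= proj i u x.

Definition half_theta6_adj (P : list pt) (u v : pt) : Prop :=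
  half_theta6_arc P u v \/ half_theta6_arc P v u.

Definition in_canon_tri (i : nat) (u w x : pt) : Prop :=
  x = u \/
  exists r t, 0 < r /\ cone_lo i <= t <= cone_hi i /\
              x = vadd u (vscale r (dir t)) /\ proj i u x <= proj i u w.

Definition tri_corner_lo (i : nat) (u w : pt) : pt :=
  vadd u (vscale (proj i u w / cos (PI / 6)) (dir (cone_lo i))).
Definition tri_corner_hi (i : nat) (u w : pt) : pt :=
  vadd u (vscale (proj i u w / cos (PI / 6)) (dir (cone_hi i))).
Definition tri_mid (i : nat) (u w : pt) : pt :=
  vscale (1 / 2) (vadd (tri_corner_lo i u w) (tri_corner_hi i u w)).

Definition angle (a b c : pt) : R :=
  acos (dot (vsub b a) (vsub c a) / (norm (vsub b a) * norm (vsub c a))).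

Fixpoint is_path (G : pt -> pt -> Prop) (x : pt) (l : list pt) (y : pt) : Prop :=
  match l with
  | nil => x = y
  | z :: l' => G x z /\ is_path G z l' y
  end.

Fixpoint path_length (x : pt) (l : list pt) : R :=
  match l with
  | nil => 0
  | z :: l' => edist x z + path_length z l'
  end.

(* Main.v *)
Require Import Defs.
From Stdlib Require Import Reals List Lra Lia Psatz Classical ClassicalEpsilon.
Open Scope R_scope.

Lemma s3_sq : sqrt 3 * sqrt 3 = 3.
Proof. apply sqrt_sqrt; lra. Qed.
Lemma s3_pos : 0 < sqrt 3.
Proof. apply sqrt_lt_R0; lra. Qed.


Lemma cos_4PI3 : cos (PI/3 + PI) = -1/2.
Proof. rewrite neg_cos, cos_PI3; lra. Qed.
Lemma sin_4PI3 : sin (PI/3 + PI) = - (sqrt 3 / 2).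
Proof. rewrite neg_sin, sin_PI3; lra. Qed.
Lemma cos_5PI3 : cos (2*(PI/3) + PI) = 1/2.
Proof. rewrite neg_cos, cos_2PI3; lra. Qed.
Lemma sin_5PI3 : sin (2*(PI/3) + PI) = - (sqrt 3 / 2).
Proof. rewrite neg_sin, sin_2PI3; lra. Qed.
Lemma cos_7PI6 : cos (PI/6 + PI) = - (sqrt 3 / 2).
Proof. rewrite neg_cos, cos_PI6; lra. Qed.
Lemma sin_7PI6 : sin (PI/6 + PI) = -1/2.
Proof. rewrite neg_sin, sin_PI6; lra. Qed.
Lemma cos_11PI6 : cos (2*PI - PI/6) = sqrt 3 / 2.
Proof. rewrite cos_minus, cos_2PI, sin_2PI, cos_PI6; lra. Qed.
Lemma sin_11PI6 : sin (2*PI - PI/6) = -1/2.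
Proof. rewrite sin_minus, cos_2PI, sin_2PI, sin_PI6; lra. Qed.

Definition clo_c (i:nat) : R := match i with 0%nat => 1/2 | 1%nat => -1 | _ => 1/2 end.
Definition clo_s (i:nat) : R := match i with 0%nat => sqrt 3/2 | 1%nat => 0 | _ => -(sqrt 3/2) end.
Definition chi_c (i:nat) : R := match i with 0%nat => -1/2 | 1%nat => -1/2 | _ => 1 end.
Definition chi_s (i:nat) : R := match i with 0%nat => sqrt 3/2 | 1%nat => -(sqrt 3/2) | _ => 0 end.
Definition cb_c (i:nat) : R := match i with 0%nat => 0 | 1%nat => -(sqrt 3/2) | _ => sqrt 3/2 end.
Definition cb_s (i:nat) : R := match i with 0%nat => 1 | 1%nat => -1/2 | _ => -1/2 end.

Lemma lo_val i : (i < 3)%nat -> cos (cone_lo i) = clo_c i /\ sin (cone_lo i) = clo_s i.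
Proof.
  intros Hi; unfold cone_lo.
  destruct i as [|[|[|i]]]; try lia; simpl INR.
  - replace (PI/3 + 0 * (2*PI/3)) with (PI/3) by lra. rewrite cos_PI3, sin_PI3; simpl; lra.
  - replace (PI/3 + 1 * (2*PI/3)) with PI by lra. rewrite cos_PI, sin_PI; simpl; lra.
  - replace (PI/3 + (1+1) * (2*PI/3)) with (2*(PI/3) + PI) by lra.
    rewrite cos_5PI3, sin_5PI3; simpl; lra.
Qed.

Lemma hi_val i : (i < 3)%nat -> cos (cone_hi i) = chi_c i /\ sin (cone_hi i) = chi_s i.
Proof.
  intros Hi; unfold cone_hi.
  destruct i as [|[|[|i]]]; try lia; simpl INR.
  - replace (2*PI/3 + 0 * (2*PI/3)) with (2*(PI/3)) by lra. rewrite cos_2PI3, sin_2PI3; simpl; lra.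
  - replace (2*PI/3 + 1 * (2*PI/3)) with (PI/3+PI) by lra. rewrite cos_4PI3, sin_4PI3; simpl; lra.
  - replace (2*PI/3 + (1+1) * (2*PI/3)) with (2*PI) by lra.
    rewrite cos_2PI, sin_2PI; simpl; lra.
Qed.

Lemma bis_val i : (i < 3)%nat -> cos (cone_bis i) = cb_c i /\ sin (cone_bis i) = cb_s i.
Proof.
  intros Hi; unfold cone_bis.
  destruct i as [|[|[|i]]]; try lia; simpl INR.
  - replace (PI/2 + 0 * (2*PI/3)) with (PI/2) by lra. rewrite cos_PI2, sin_PI2; simpl; lra.
  - replace (PI/2 + 1 * (2*PI/3)) with (PI/6+PI) by lra. rewrite cos_7PI6, sin_7PI6; simpl; lra.
  - replace (PI/2 + (1+1) * (2*PI/3)) with (2*PI - PI/6) by lra.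
    rewrite cos_11PI6, sin_11PI6; simpl; lra.
Qed.

Definition sc (m:nat) (d:pt) : R :=
  match m with
  | 0%nat => snd d
  | 1%nat => - (snd d + sqrt 3 * fst d) / 2
  | _ => - (snd d - sqrt 3 * fst d) / 2
  end.

Lemma proj_sc i u v : (i < 3)%nat -> proj i u v = sc i (vsub v u).
Proof.
  intros Hi. unfold proj, dot, dir. destruct (bis_val i Hi) as [Hc Hs].
  simpl fst; simpl snd. rewrite Hc, Hs.
  destruct i as [|[|[|i]]]; try lia; simpl; lra.
Qed.

Lemma gp_sc P p q m : general_position P -> In p P -> In q P -> p <> q -> (m < 3)%nat ->
  sc m (vsub q p) <> 0.
Proof.
  intros HG Hp Hq Hne Hm. pose proof s3_pos.
  destruct m as [|[|[|m]]]; try lia.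
  - pose proof (HG p q Hp Hq Hne 0%nat ltac:(lia)) as H1. simpl INR in H1.
    replace (0*PI/3) with 0 in H1 by lra. rewrite sin_0, cos_0 in H1.
    unfold sc, vsub; simpl. lra.
  - pose proof (HG p q Hp Hq Hne 2%nat ltac:(lia)) as H1. simpl INR in H1.
    replace ((1+1)*PI/3) with (2*(PI/3)) in H1 by lra. rewrite sin_2PI3, cos_2PI3 in H1.
    unfold sc, vsub; simpl. intro E; apply H1. lra.
  - pose proof (HG p q Hp Hq Hne 1%nat ltac:(lia)) as H1. simpl INR in H1.
    replace (1*PI/3) with (PI/3) in H1 by lra. rewrite sin_PI3, cos_PI3 in H1.
    unfold sc, vsub; simpl. intro E; apply H1. lra.
Qed.

Definition inC (i:nat) (u v : pt) : Prop :=
  forall k, (k < 3)%nat -> k <> i -> sc k (vsub v u) < 0.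

Lemma sc_dir k r t : (k < 3)%nat -> sc k (r * cos t, r * sin t) = r * sin (t - INR k * (2*PI/3)).
Proof.
  intros Hk. pose proof s3_pos.
  destruct k as [|[|[|k]]]; try lia; simpl INR; simpl.
  - replace (t - 0 * (2*PI/3)) with t by lra. reflexivity.
  - replace (t - 1 * (2*PI/3)) with (t - 2*(PI/3)) by lra.
    rewrite sin_minus, cos_2PI3, sin_2PI3. lra.
  - replace (t - (1+1) * (2*PI/3)) with (t - (PI/3+PI)) by lra.
    rewrite sin_minus, cos_4PI3, sin_4PI3. lra.
Qed.

Lemma cone_fwd i u v : in_pos_cone i u v -> (i < 3)%nat /\ inC i u v.
Proof.
  intros [Hi [r [t [Hr [Ht Hv]]]]]. split; [exact Hi|].
  intros k Hk Hki. subst v. unfold vsub, vadd, vscale, dir; simpl.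
  replace (fst u + r * cos t - fst u) with (r * cos t) by ring.
  replace (snd u + r * sin t - snd u) with (r * sin t) by ring.
  rewrite sc_dir by exact Hk.
  assert (sin (t - INR k * (2 * PI / 3)) < 0).
  { unfold cone_lo, cone_hi in Ht. pose proof PI_RGT_0.
    destruct i as [|[|[|i]]]; try lia; destruct k as [|[|[|k]]]; try lia; simpl INR in *.
    - apply sin_lt_0_var; lra.
    - apply sin_lt_0_var; lra.
    - apply sin_lt_0; lra.
    - apply sin_lt_0_var; lra.
    - apply sin_lt_0; lra.
    - apply sin_lt_0; lra. }
  nra.
Qed.

Lemma sqrt_1_minus x y r : 0 < r -> r * r = x * x + y * y ->
  sqrt (1 - (x / r)²) = Rabs y / r.
Proof.
  intros Hr Hrr.
  replace (1 - (x / r)²) with ((Rabs y / r)²).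
  - apply sqrt_Rsqr. apply Rmult_le_pos; [apply Rabs_pos| left; apply Rinv_0_lt_compat; lra].
  - assert (Ha : Rabs y * Rabs y = y*y) by (rewrite <- Rabs_mult; apply Rabs_right; nra).
    unfold Rsqr.
    replace (Rabs y / r * (Rabs y / r)) with ((Rabs y * Rabs y)/(r*r)) by (field; lra).
    replace (x / r * (x / r)) with ((x*x)/(r*r)) by (field; lra).
    rewrite Ha, Hrr. field. nra.
Qed.

Lemma cone_bwd i u v : (i < 3)%nat -> inC i u v -> in_pos_cone i u v.
Proof.
  intros Hi HC. split; [exact Hi|].
  set (x := fst (vsub v u)). set (y := snd (vsub v u)).
  pose proof s3_pos as H3. pose proof s3_sq as H33. pose proof PI_RGT_0 as HPI.
  set (r := sqrt (x*x + y*y)).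
  assert (Hnz : x*x + y*y > 0).
  { destruct i as [|[|[|i]]]; try lia.
    - pose proof (HC 1%nat ltac:(lia) ltac:(lia)) as Hq. unfold sc in Hq; fold x y in Hq.
      pose proof (HC 2%nat ltac:(lia) ltac:(lia)) as Hq2. unfold sc in Hq2; fold x y in Hq2. nra.
    - pose proof (HC 0%nat ltac:(lia) ltac:(lia)) as Hq. unfold sc in Hq; fold y in Hq. nra.
    - pose proof (HC 0%nat ltac:(lia) ltac:(lia)) as Hq. unfold sc in Hq; fold y in Hq. nra. }
  assert (Hr : 0 < r) by (apply sqrt_lt_R0; lra).
  assert (Hrr : r * r = x*x + y*y) by (apply sqrt_sqrt; lra).
  assert (Hxr' : x / r * r = x) by (field; lra).
  assert (Hc1 : -1 <= x / r <= 1).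
  { split.
    - apply (Rmult_le_reg_r r); [lra|]. rewrite Hxr'; nra.
    - apply (Rmult_le_reg_r r); [lra|]. rewrite Hxr'; nra. }
  pose proof (sqrt_1_minus x y r Hr Hrr) as Hsq.
  pose proof (cos_acos _ Hc1) as Hca. pose proof (sin_acos _ Hc1) as Hsa.
  rewrite Hsq in Hsa. pose proof (acos_bound (x/r)) as Hab.
  assert (Hxr : x = r * (x / r)) by (field; lra).
  assert (Hv : forall t, cos t = x / r -> sin t = y / r -> v = vadd u (vscale r (dir t))).
  { intros t Hct Hst. unfold vadd, vscale, dir; simpl. rewrite Hct, Hst.
    destruct v as [v1 v2], u as [u1 u2]. unfold x, y, vsub in *; simpl in *.
    f_equal; field; lra. }
  destruct i as [|[|[|i]]]; try lia.
  -
    pose proof (HC 1%nat ltac:(lia) ltac:(lia)) as H1.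
    pose proof (HC 2%nat ltac:(lia) ltac:(lia)) as H2.
    unfold sc in H1, H2; fold x y in H1, H2.
    assert (Hy : 0 < y) by nra.
    exists r, (acos (x/r)). split; [exact Hr|]. split.
    + unfold cone_lo, cone_hi; simpl INR.
      assert (2 * x < r) by nra. assert (- r < 2 * x) by nra.
      split.
      * replace (PI/3 + 0 * (2*PI/3)) with (PI/3) by lra.
        apply cos_decreasing_0; try lra. rewrite Hca, cos_PI3.
        apply (Rmult_lt_reg_r r); [lra|]. rewrite Hxr'; lra.
      * replace (2*PI/3 + 0 * (2*PI/3)) with (2*(PI/3)) by lra.
        apply cos_decreasing_0; try lra. rewrite Hca, cos_2PI3.
        apply (Rmult_lt_reg_r r); [lra|]. rewrite Hxr'; lra.
    + apply Hv; [exact Hca|]. rewrite Hsa, Rabs_right; lra.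
  -
    pose proof (HC 0%nat ltac:(lia) ltac:(lia)) as H0.
    pose proof (HC 2%nat ltac:(lia) ltac:(lia)) as H2.
    unfold sc in H0, H2; fold x y in H0, H2.
    assert (Hx0 : x < 0) by nra.
    assert (Hsx : sqrt 3 * x * (sqrt 3 * x) > y*y) by nra.
    replace (sqrt 3 * x * (sqrt 3 * x)) with (sqrt 3 * sqrt 3 * x * x) in Hsx by ring.
    rewrite H33 in Hsx.
    assert (2 * x < - r) by nra.
    assert (Hlt : -1 < x / r < 1).
    { split; apply (Rmult_lt_reg_r r); try lra; rewrite Hxr'; nra. }
    pose proof (acos_bound_lt _ Hlt) as Hab2.
    exists r, (2*PI - acos (x/r)). split; [exact Hr|]. split.
    + unfold cone_lo, cone_hi; simpl INR.
      assert (2*(PI/3) < acos (x/r)).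
      { apply cos_decreasing_0; try lra. rewrite Hca, cos_2PI3.
        apply (Rmult_lt_reg_r r); [lra|]. rewrite Hxr'; lra. }
      lra.
    + apply Hv.
      * rewrite cos_minus, cos_2PI, sin_2PI, Hca; ring.
      * rewrite sin_minus, cos_2PI, sin_2PI, Hsa, Rabs_left by lra. field; lra.
  -
    pose proof (HC 0%nat ltac:(lia) ltac:(lia)) as H0.
    pose proof (HC 1%nat ltac:(lia) ltac:(lia)) as H1.
    unfold sc in H0, H1; fold x y in H0, H1.
    assert (Hx0 : x > 0) by nra.
    assert (Hsx : sqrt 3 * x * (sqrt 3 * x) > y*y) by nra.
    replace (sqrt 3 * x * (sqrt 3 * x)) with (sqrt 3 * sqrt 3 * x * x) in Hsx by ring.
    rewrite H33 in Hsx.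
    assert (r < 2 * x) by nra.
    assert (Hlt : -1 < x / r < 1).
    { split; apply (Rmult_lt_reg_r r); try lra; rewrite Hxr'; nra. }
    pose proof (acos_bound_lt _ Hlt) as Hab2.
    exists r, (2*PI - acos (x/r)). split; [exact Hr|]. split.
    + unfold cone_lo, cone_hi; simpl INR.
      assert (acos (x/r) < PI/3).
      { apply cos_decreasing_0; try lra. rewrite Hca, cos_PI3.
        apply (Rmult_lt_reg_r r); [lra|]. rewrite Hxr'; lra. }
      lra.
    + apply Hv.
      * rewrite cos_minus, cos_2PI, sin_2PI, Hca; ring.
      * rewrite sin_minus, cos_2PI, sin_2PI, Hsa, Rabs_left by lra. field; lra.
Qed.

Definition perm3 (j k l : nat) : Prop :=
  (j < 3 /\ k < 3 /\ l < 3 /\ j <> k /\ j <> l /\ k <> l)%nat.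

Lemma perm3_cases j k l : perm3 j k l ->
  (j = 0 /\ k = 1 /\ l = 2 \/ j = 0 /\ k = 2 /\ l = 1 \/ j = 1 /\ k = 0 /\ l = 2 \/
   j = 1 /\ k = 2 /\ l = 0 \/ j = 2 /\ k = 0 /\ l = 1 \/ j = 2 /\ k = 1 /\ l = 0)%nat.
Proof. unfold perm3; lia. Qed.

Lemma perm3_swap j k l : perm3 j k l -> perm3 k j l.
Proof. unfold perm3; lia. Qed.
Lemma perm3_swap2 j k l : perm3 j k l -> perm3 j l k.
Proof. unfold perm3; lia. Qed.
Lemma perm3_rot j k l : perm3 j k l -> perm3 l j k.
Proof. unfold perm3; lia. Qed.

Lemma sc_sub m a b c : sc m (vsub a c) = sc m (vsub a b) + sc m (vsub b c).
Proof. destruct m as [|[|m]]; unfold sc, vsub; simpl; field. Qed.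
Lemma sc_neg m a b : sc m (vsub a b) = - sc m (vsub b a).
Proof. destruct m as [|[|m]]; unfold sc, vsub; simpl; field. Qed.
Lemma sc_zero m a : sc m (vsub a a) = 0.
Proof. destruct m as [|[|m]]; unfold sc, vsub; simpl; field. Qed.

Lemma sum3 j k l d : perm3 j k l -> sc j d + sc k d + sc l d = 0.
Proof.
  intros H; destruct (perm3_cases _ _ _ H) as [H0|[H0|[H0|[H0|[H0|H0]]]]];
    destruct H0 as [-> [-> ->]]; unfold sc; field.
Qed.

Lemma norm3 j k l d : perm3 j k l ->
  3 * (fst d * fst d + snd d * snd d) = 2 * (sc j d * sc j d + sc k d * sc k d + sc l d * sc l d).
Proof.
  pose proof s3_sq as H3.
  intros H; destruct (perm3_cases _ _ _ H) as [H0|[H0|[H0|[H0|[H0|H0]]]]];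
    destruct H0 as [-> [-> ->]]; unfold sc; nra.
Qed.

Lemma norm_sq d : norm d * norm d = fst d * fst d + snd d * snd d.
Proof. unfold norm, dot. apply sqrt_sqrt. nra. Qed.

Lemma norm_nonneg d : 0 <= norm d.
Proof. unfold norm. apply sqrt_pos. Qed.

Lemma edge_bound j k l d : perm3 j k l -> sc k d <= 0 -> 0 <= sc j d ->
  norm d * sqrt 3 <= 2 * (sc j d - sc k d).
Proof.
  intros Hp Hk Hj. pose proof (norm3 j k l d Hp) as N. pose proof (sum3 j k l d Hp) as S.
  pose proof (norm_sq d) as Nq. pose proof (norm_nonneg d). pose proof s3_pos. pose proof s3_sq.
  assert (Hsq : (norm d * sqrt 3) * (norm d * sqrt 3) <= (2 * (sc j d - sc k d)) * (2 * (sc j d - sc k d))).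
  { replace ((norm d * sqrt 3) * (norm d * sqrt 3)) with ((norm d * norm d) * (sqrt 3 * sqrt 3)) by ring.
    rewrite Nq. nra. }
  nra.
Qed.

Lemma edist_sym a b : edist a b = edist b a.
Proof. unfold edist, norm, dot, vsub; simpl. f_equal; ring. Qed.

Lemma is_path_app G x l1 y l2 z : is_path G x l1 y -> is_path G y l2 z -> is_path G x (l1 ++ l2) z.
Proof.
  revert x; induction l1 as [|a l1 IH]; intros x H1 H2; simpl in *.
  - subst; exact H2.
  - destruct H1 as [Ha H1]; split; [exact Ha| eapply IH; eauto].
Qed.

Fixpoint revp (x : pt) (l : list pt) : list pt :=
  match l with nil => nil | z :: l' => revp z l' ++ (x :: nil) end.

Lemma rev_path G x l y : (forall a b, G a b -> G b a) -> is_path G x l y -> is_path G y (revp x l) x.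
Proof.
  intros Gs; revert x; induction l as [|a l IH]; intros x H; simpl in *.
  - subst; reflexivity.
  - destruct H as [Ha H]. eapply is_path_app; [apply IH; exact H|]. simpl; split; auto.
Qed.

Lemma len_app1 G a m b c : is_path G a m b -> path_length a (m ++ c :: nil) = path_length a m + edist b c.
Proof.
  revert a; induction m as [|z m IH]; intros a H; simpl in *.
  - subst; ring.
  - destruct H as [_ H]. rewrite (IH z H). ring.
Qed.

Lemma len_rev G x l y : (forall a b, G a b -> G b a) -> is_path G x l y ->
  path_length y (revp x l) = path_length x l.
Proof.
  intros Gs; revert x; induction l as [|a l IH]; intros x H; simpl in *.
  - reflexivity.
  - destruct H as [Ha H]. rewrite (len_app1 G y (revp a l) a x) by (apply rev_path; auto).
    rewrite IH by exact H. rewrite (edist_sym a x). ring.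
Qed.

Lemma in_revp a x l : In a (revp x l) -> a = x \/ In a l.
Proof.
  revert x; induction l as [|z l IH]; intros x H; simpl in *.
  - contradiction.
  - apply in_app_or in H. destruct H as [H|H].
    + destruct (IH z H) as [->|H']; auto.
    + simpl in H. destruct H as [->|[]]; auto.
Qed.

Lemma adj_sym P : forall a b, half_theta6_adj P a b -> half_theta6_adj P b a.
Proof. unfold half_theta6_adj; tauto. Qed.

Lemma path_inP P x l y a : is_path (half_theta6_adj P) x l y -> In a l -> In a P.
Proof.
  revert x; induction l as [|z l IH]; intros x H Ha; simpl in *.
  - contradiction.
  - destruct H as [Hz H]. destruct Ha as [->|Ha].
    + destruct Hz as [[_ [HH _]]|[HH _]]; exact HH.
    + eapply IH; eauto.
Qed.

Fixpoint cnt (Q : pt -> Prop) (L : list pt) : nat :=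
  match L with
  | nil => 0
  | a :: L' => ((if excluded_middle_informative (Q a) then 1 else 0) + cnt Q L')%nat
  end.

Lemma cnt_le (Q1 Q2 : pt -> Prop) L : (forall x, Q1 x -> Q2 x) -> (cnt Q1 L <= cnt Q2 L)%nat.
Proof.
  intros Hs; induction L as [|a L IH]; simpl; [lia|].
  destruct (excluded_middle_informative (Q1 a)); destruct (excluded_middle_informative (Q2 a));
    try lia. exfalso; auto.
Qed.

Lemma cnt_lt (Q1 Q2 : pt -> Prop) L a : (forall x, Q1 x -> Q2 x) -> In a L -> Q2 a -> ~ Q1 a ->
  (cnt Q1 L < cnt Q2 L)%nat.
Proof.
  intros Hs Ha H2 H1; induction L as [|b L IH]; simpl in *; [contradiction|].
  destruct Ha as [->|Ha].
  - pose proof (cnt_le Q1 Q2 L Hs).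
    destruct (excluded_middle_informative (Q1 a)); destruct (excluded_middle_informative (Q2 a));
      try contradiction; lia.
  - specialize (IH Ha).
    destruct (excluded_middle_informative (Q1 b)); destruct (excluded_middle_informative (Q2 b));
      try lia. exfalso; auto.
Qed.

Lemma cnt_pos (Q : pt -> Prop) L a : In a L -> Q a -> (0 < cnt Q L)%nat.
Proof.
  intros Ha HQ; induction L as [|b L IH]; simpl in *; [contradiction|].
  destruct Ha as [->|Ha].
  - destruct (excluded_middle_informative (Q a)); [lia|contradiction].
  - specialize (IH Ha); lia.
Qed.

Lemma find_min (Q : pt -> Prop) (f : pt -> R) L : (exists x, In x L /\ Q x) ->
  exists v, In v L /\ Q v /\ forall x, In x L -> Q x -> f v <= f x.
Proof.
  induction L as [|a L IH]; intros [x [Hx HQ]]; simpl in *; [contradiction|].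
  destruct (classic (exists y, In y L /\ Q y)) as [Hex|Hnex].
  - destruct (IH Hex) as [v [Hv [HQv Hmin]]].
    destruct (classic (Q a /\ f a <= f v)) as [[HQa Hav]|Hn].
    + exists a. split; [auto|]. split; [auto|]. intros y [->|Hy] HQy; [lra|].
      specialize (Hmin y Hy HQy); lra.
    + exists v. split; [auto|]. split; [auto|]. intros y [->|Hy] HQy; [|auto].
      destruct (Rle_dec (f v) (f y)) as [|Hlt]; [auto|]. exfalso; apply Hn; split; auto; lra.
  - destruct Hx as [->|Hx]; [|exfalso; apply Hnex; eauto].
    exists x. split; [auto|]. split; [auto|]. intros y [->|Hy] HQy; [lra|].
    exfalso; apply Hnex; eauto.
Qed.

Definition inT (j : nat) (u w z : pt) : Prop :=
  (forall k, (k < 3)%nat -> k <> j -> sc k (vsub z u) <= 0) /\ sc j (vsub z u) <= sc j (vsub w u).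

Definition PathJ P j k u w := exists l, is_path (half_theta6_adj P) u l w /\
  (forall x, In x l -> inT j u w x) /\
  path_length u l * sqrt 3 <= 2 * (sc j (vsub w u) - sc k (vsub w u)).

Lemma perm3_in j k l k' : perm3 j k l -> (k' < 3)%nat -> k' = j \/ k' = k \/ k' = l.
Proof. unfold perm3; lia. Qed.

Lemma inC_j_pos j k l u w : perm3 j k l -> inC j u w -> 0 < sc j (vsub w u).
Proof.
  intros Hp HC. pose proof (sum3 j k l (vsub w u) Hp).
  destruct Hp as [? [? [? [? [? ?]]]]].
  pose proof (HC k ltac:(lia) ltac:(lia)). pose proof (HC l ltac:(lia) ltac:(lia)). lra.
Qed.

Lemma inT_self j k l u w : perm3 j k l -> inC j u w -> inT j u w u.
Proof.
  intros Hp HC. split.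
  - intros k' _ _. rewrite sc_zero; lra.
  - rewrite sc_zero. pose proof (inC_j_pos j k l u w Hp HC); lra.
Qed.

Lemma inT_w j u w : inC j u w -> inT j u w w.
Proof. intros HC; split; [intros k' Hk Hk'; left; apply HC; auto | lra]. Qed.

Lemma inT_gp P j u w z : general_position P -> In u P -> In z P -> z <> u -> inT j u w z -> inC j u z.
Proof.
  intros HG Hu Hz Hne [HT _] k' Hk Hk'. specialize (HT k' Hk Hk').
  pose proof (gp_sc P u z k' HG Hu Hz (not_eq_sym Hne) Hk). lra.
Qed.

Lemma closest P j k l u w : general_position P -> perm3 j k l -> In u P -> In w P -> inC j u w ->
  exists v, In v P /\ half_theta6_adj P u v /\ inC j u v /\ inT j u w v /\
   (forall z, In z P -> inT j u w z -> z <> u -> sc j (vsub v u) <= sc j (vsub z u)).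
Proof.
  intros HG Hp Hu Hw HC. assert (Hj : (j < 3)%nat) by (destruct Hp; lia).
  destruct (find_min (in_pos_cone j u) (proj j u) P) as [v [Hv [Hcv Hmin]]].
  { exists w; split; [auto| apply cone_bwd; auto]. }
  exists v. destruct (cone_fwd _ _ _ Hcv) as [_ HCv].
  split; [auto|]. split.
  { left. split; [auto|]. split; [auto|]. exists j. split; [auto|].
    intros x Hx _ Hcx. apply Hmin; auto. }
  split; [auto|]. split.
  - split; [intros k' Hk Hk'; left; apply HCv; auto|].
    rewrite <- !proj_sc by auto. apply Hmin; auto. apply cone_bwd; auto.
  - intros z Hz HT Hne. rewrite <- !proj_sc by auto. apply Hmin; auto. apply cone_bwd; auto.
    eapply inT_gp; eauto.
Qed.

Lemma sub_fwd j u v w z : inC j u v -> inT j v w z -> inT j u w z.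
Proof.
  intros HC [HT HTj]. split.
  - intros k' Hk Hk'. rewrite (sc_sub k' z v u). specialize (HT k' Hk Hk'). specialize (HC k' Hk Hk'). lra.
  - rewrite (sc_sub j z v u), (sc_sub j w v u). lra.
Qed.

Lemma sub_rev j k l u v w z : perm3 j k l -> inC j u v -> inC j u w -> inT k w v z -> inT j u w z.
Proof.
  intros Hp HCv HCw [HT HTk]. pose proof Hp as Hp'. destruct Hp' as [? [? [? [? [? ?]]]]].
  split.
  - intros k' Hk Hk'. destruct (perm3_in j k l k' Hp Hk) as [ -> | [ -> | -> ] ]; [lia| |].
    + rewrite (sc_sub k z w u). pose proof (HCv k ltac:(lia) ltac:(lia)) as Hq.
      rewrite (sc_sub k v w u) in Hq. lra.
    + rewrite (sc_sub l z w u). pose proof (HT l ltac:(lia) ltac:(lia)).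
      pose proof (HCw l ltac:(lia) ltac:(lia)). lra.
  - rewrite (sc_sub j z w u). pose proof (HT j ltac:(lia) ltac:(lia)). lra.
Qed.

Lemma u_notin_rev j k l u v w : perm3 j k l -> inC j u w -> ~ inT k w v u.
Proof.
  intros Hp HCw [HT _]. destruct Hp as [? [? [? [? [? ?]]]]].
  pose proof (HT l ltac:(lia) ltac:(lia)). pose proof (HCw l ltac:(lia) ltac:(lia)).
  rewrite sc_neg in H5. lra.
Qed.

Lemma u_notin_fwd j k l u v w : perm3 j k l -> inC j u v -> ~ inT j v w u.
Proof.
  intros Hp HCv [HT _]. destruct Hp as [? [? [? [? [? ?]]]]].
  pose proof (HT k ltac:(lia) ltac:(lia)). pose proof (HCv k ltac:(lia) ltac:(lia)).
  rewrite sc_neg in H5. lra.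
Qed.

Lemma ext_fwd P j k l u v w : perm3 j k l -> half_theta6_adj P u v -> inC j u v ->
  inT j u w v -> PathJ P j k v w -> PathJ P j k u w.
Proof.
  intros Hp Huv HCv HTv [l' [Hpath [Hin Hlen]]].
  exists (v :: l'). split; [simpl; auto|]. split.
  - intros x [ -> | Hx ]; [auto| eapply sub_fwd; eauto].
  - simpl. pose proof Hp as Hp'. destruct Hp' as [? [? [? [? [? ?]]]]].
    pose proof (edge_bound j k l (vsub v u) Hp) as E.
    pose proof (inC_j_pos j k l u v Hp HCv).
    pose proof (HCv k ltac:(lia) ltac:(lia)).
    specialize (E ltac:(lra) ltac:(lra)). unfold edist.
    rewrite (sc_sub j w v u), (sc_sub k w v u). lra.
Qed.

Lemma ext_rev P j k l u v w : perm3 j k l -> half_theta6_adj P u v -> inC j u v ->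
  inT j u w v -> inC j u w -> PathJ P k j w v -> PathJ P j k u w.
Proof.
  intros Hp Huv HCv HTv HCw [l' [Hpath [Hin Hlen]]].
  exists (v :: revp w l'). split; [simpl; split; [auto| apply rev_path; auto; apply adj_sym]|]. split.
  - intros x [ -> | Hx ].
    + exact HTv.
    + destruct (in_revp _ _ _ Hx) as [ -> | Hx' ]; [apply inT_w; auto|].
      eapply sub_rev; [exact Hp|exact HCv|exact HCw|apply Hin; exact Hx'].
  - simpl. rewrite (len_rev _ w l' v (adj_sym P) Hpath).
    pose proof Hp as Hp'. destruct Hp' as [? [? [? [? [? ?]]]]].
    pose proof (edge_bound j k l (vsub v u) Hp) as E.
    pose proof (inC_j_pos j k l u v Hp HCv).
    pose proof (HCv k ltac:(lia) ltac:(lia)).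
    specialize (E ltac:(lra) ltac:(lra)). unfold edist.
    rewrite (sc_neg j v w), (sc_neg k v w) in Hlen.
    rewrite (sc_sub j w v u), (sc_sub k w v u). lra.
Qed.

Lemma cond_rev P j k l u v w z : perm3 j k l -> inC j u w -> In z P ->
  (forall z, In z P -> inT j u w z -> z <> u -> sc j (vsub v u) <= sc j (vsub z u)) ->
  inC j u v -> inT k w v z -> sc j (vsub v w) <= sc j (vsub z w).
Proof.
  intros Hp HCw Hz Hmin HCv HT.
  destruct (Rle_dec (sc j (vsub v w)) (sc j (vsub z w))) as [|Hlt]; [auto|exfalso].
  assert (Hzu : z <> u) by (intros ->; exact (u_notin_rev j k l u v w Hp HCw HT)).
  pose proof (Hmin z Hz (sub_rev j k l u v w z Hp HCv HCw HT) Hzu).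
  rewrite (sc_sub j z w u), (sc_sub j v w u) in H. lra.
Qed.

Lemma single_path P j k l u w : perm3 j k l -> half_theta6_adj P u w -> inC j u w -> PathJ P j k u w.
Proof.
  intros Hp Huw HC. exists (w :: nil). split; [simpl; auto|]. split.
  - intros x [ -> | [] ]. apply inT_w; auto.
  - simpl. pose proof Hp as Hp'. destruct Hp' as [? [? [? [? [? ?]]]]].
    pose proof (edge_bound j k l (vsub w u) Hp) as E.
    pose proof (inC_j_pos j k l u w Hp HC).
    pose proof (HC k ltac:(lia) ltac:(lia)).
    specialize (E ltac:(lra) ltac:(lra)). unfold edist. lra.
Qed.

Lemma lemB P (HG : general_position P) n : forall u w j k l, perm3 j k l -> In u P -> In w P ->
  inC j u w -> (cnt (inT j u w) P <= n)%nat ->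
  (forall z, In z P -> inT j u w z -> sc k (vsub w u) <= sc k (vsub z u)) -> PathJ P j k u w.
Proof.
  induction n as [|n IH]; intros u w j k l Hp Hu Hw HC Hcnt Hcond.
  - pose proof (cnt_pos (inT j u w) P u Hu (inT_self j k l u w Hp HC)). lia.
  - destruct (closest P j k l u w HG Hp Hu Hw HC) as [v [Hv [Huv [HCv [HTv Hmin]]]]].
    destruct (classic (v = w)) as [->|Hne]; [eapply single_path; eauto|].
    pose proof Hp as Hp'. destruct Hp' as [? [? [? [? [? ?]]]]].
    assert (Hj : 0 < sc j (vsub w v)).
    { pose proof (gp_sc P v w j HG Hv Hw Hne ltac:(lia)). destruct HTv as [_ HTj].
      rewrite (sc_sub j w v u) in HTj. lra. }
    assert (Hk : sc k (vsub w v) < 0).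
    { pose proof (gp_sc P v w k HG Hv Hw Hne ltac:(lia)). pose proof (Hcond v Hv HTv) as Hq.
      rewrite (sc_sub k w v u) in Hq. lra. }
    pose proof (gp_sc P v w l HG Hv Hw Hne ltac:(lia)) as Hl0.
    destruct (Rlt_dec (sc l (vsub w v)) 0) as [Hl|Hl].
    + assert (HCvw : inC j v w).
      { intros k' Hk1 Hk2. destruct (perm3_in j k l k' Hp Hk1) as [ -> | [ -> | -> ] ]; [lia|auto|auto]. }
      eapply ext_fwd; eauto. eapply IH; eauto.
      * pose proof (cnt_lt (inT j v w) (inT j u w) P u (fun z => sub_fwd j u v w z HCv) Hu
          (inT_self j k l u w Hp HC) (u_notin_fwd j k l u v w Hp HCv)). lia.
      * intros z Hz HT. pose proof (Hcond z Hz (sub_fwd j u v w z HCv HT)) as Hq.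
        rewrite (sc_sub k w v u), (sc_sub k z v u) in Hq. lra.
    + assert (HCwv : inC k w v).
      { intros k' Hk1 Hk2. destruct (perm3_in j k l k' Hp Hk1) as [ -> | [ -> | -> ] ]; [|lia|];
        rewrite sc_neg; lra. }
      eapply ext_rev; eauto. eapply IH; [apply perm3_swap; exact Hp|exact Hw|exact Hv|exact HCwv| |].
      * pose proof (cnt_lt (inT k w v) (inT j u w) P u (fun z => sub_rev j k l u v w z Hp HCv HC) Hu
          (inT_self j k l u w Hp HC) (u_notin_rev j k l u v w Hp HC)). lia.
      * intros z Hz HT. eapply cond_rev; eauto.
Qed.

Lemma lemA P (HG : general_position P) n : forall u w j k l, perm3 j k l -> In u P -> In w P ->
  inC j u w -> (cnt (inT j u w) P <= n)%nat -> PathJ P j k u w \/ PathJ P j l u w.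
Proof.
  induction n as [|n IH]; intros u w j k l Hp Hu Hw HC Hcnt.
  - pose proof (cnt_pos (inT j u w) P u Hu (inT_self j k l u w Hp HC)). lia.
  - destruct (closest P j k l u w HG Hp Hu Hw HC) as [v [Hv [Huv [HCv [HTv Hmin]]]]].
    destruct (classic (v = w)) as [->|Hne]; [left; eapply single_path; eauto|].
    pose proof Hp as Hp'. destruct Hp' as [? [? [? [? [? ?]]]]].
    assert (Hj : 0 < sc j (vsub w v)).
    { pose proof (gp_sc P v w j HG Hv Hw Hne ltac:(lia)). destruct HTv as [_ HTj].
      rewrite (sc_sub j w v u) in HTj. lra. }
    pose proof (gp_sc P v w k HG Hv Hw Hne ltac:(lia)) as Hk0.
    pose proof (gp_sc P v w l HG Hv Hw Hne ltac:(lia)) as Hl0.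
    pose proof (sum3 j k l (vsub w v) Hp) as S.
    destruct (Rlt_dec (sc k (vsub w v)) 0) as [Hk|Hk];
    destruct (Rlt_dec (sc l (vsub w v)) 0) as [Hl|Hl].
    + assert (HCvw : inC j v w).
      { intros k' Hk1 Hk2. destruct (perm3_in j k l k' Hp Hk1) as [ -> | [ -> | -> ] ]; [lia|auto|auto]. }
      assert (Hc : (cnt (inT j v w) P <= n)%nat).
      { pose proof (cnt_lt (inT j v w) (inT j u w) P u (fun z => sub_fwd j u v w z HCv) Hu
          (inT_self j k l u w Hp HC) (u_notin_fwd j k l u v w Hp HCv)). lia. }
      destruct (IH v w j k l Hp Hv Hw HCvw Hc) as [HP|HP].
      * left; eapply ext_fwd; eauto.
      * right; eapply ext_fwd; [apply perm3_swap2; exact Hp|exact Huv|exact HCv|exact HTv|exact HP].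
    + assert (HCwv : inC k w v).
      { intros k' Hk1 Hk2. destruct (perm3_in j k l k' Hp Hk1) as [ -> | [ -> | -> ] ]; [|lia|];
        rewrite sc_neg; lra. }
      left. eapply ext_rev; [exact Hp|exact Huv|exact HCv|exact HTv|exact HC|].
      eapply (lemB P HG _ w v k j l); [apply perm3_swap; exact Hp|exact Hw|exact Hv|exact HCwv|apply le_n|].
      intros z Hz HT. eapply cond_rev; [exact Hp|exact HC|exact Hz|exact Hmin|exact HCv|exact HT].
    + assert (HCwv : inC l w v).
      { intros k' Hk1 Hk2. destruct (perm3_in j k l k' Hp Hk1) as [ -> | [ -> | -> ] ]; [| |lia];
        rewrite sc_neg; lra. }
      right. eapply ext_rev; [apply perm3_swap2; exact Hp|exact Huv|exact HCv|exact HTv|exact HC|].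
      eapply (lemB P HG _ w v l j k); [apply perm3_rot; exact Hp|exact Hw|exact Hv|exact HCwv|apply le_n|].
      intros z Hz HT. eapply cond_rev; [apply perm3_swap2; exact Hp|exact HC|exact Hz|exact Hmin|exact HCv|exact HT].
    + lra.
Qed.

Lemma mid_vec i u w : (i < 3)%nat ->
  vsub (tri_mid i u w) u = (proj i u w * cb_c i, proj i u w * cb_s i).
Proof.
  intros Hi. pose proof s3_pos as H3. pose proof s3_sq as H33.
  unfold tri_mid, tri_corner_lo, tri_corner_hi, vscale, vadd, vsub, dir; simpl.
  destruct (lo_val i Hi) as [-> ->]. destruct (hi_val i Hi) as [-> ->]. rewrite cos_PI6.
  set (p := proj i u w).
  destruct i as [|[|[|i]]]; try lia; simpl; f_equal; field_simplify; try lra; try nra.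
  all: field_simplify_eq; [|lra]; simpl; try rewrite Rmult_1_r, H33; ring.
Qed.

Lemma dot_bis i d : (i < 3)%nat -> fst d * cb_c i + snd d * cb_s i = sc i d.
Proof.
  intros Hi. destruct i as [|[|[|i]]]; try lia; destruct d; unfold sc; simpl; field.
Qed.

Lemma cb_unit i : (i < 3)%nat -> cb_c i * cb_c i + cb_s i * cb_s i = 1.
Proof.
  intros Hi. pose proof s3_sq. destruct i as [|[|[|i]]]; try lia; simpl; nra.
Qed.

Lemma final_len i k l u w (lst : list pt) : perm3 i k l -> inC i u w ->
  path_length u lst * sqrt 3 <= 2 * (sc i (vsub w u) - sc k (vsub w u)) ->
  path_length u lst <= (sqrt 3 * cos (angle u w (tri_mid i u w)) + sin (angle u w (tri_mid i u w))) * edist u w.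
Proof.
  intros Hp HC Hlen.
  assert (Hi : (i < 3)%nat) by (destruct Hp; lia).
  pose proof s3_pos as H3. pose proof s3_sq as H33.
  set (d := vsub w u). fold d in Hlen.
  set (p := sc i d). set (a := sc k d). set (b := sc l d).
  assert (Hp0 : 0 < p) by (apply (inC_j_pos i k l u w Hp HC)).
  pose proof (sum3 i k l d Hp) as S. fold p a b in S.
  pose proof (norm3 i k l d Hp) as N3. fold p a b in N3.
  pose proof (norm_sq d) as Nq. pose proof (norm_nonneg d) as Nn.
  set (N := norm d) in *.
  assert (HN : edist u w = N) by reflexivity.
  assert (HNN : 3 * (N * N) = 2 * (p*p + a*a + b*b)) by (rewrite Nq; exact N3).
  assert (HN0 : 0 < N) by nra.
  assert (HNp : N * N >= p * p) by (pose proof (Rle_0_sqr (a - b)); unfold Rsqr in *; nra).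
  assert (HpN : p <= N) by nra.
  unfold angle. rewrite (mid_vec i u w Hi). rewrite (proj_sc i u w Hi). fold d p.
  assert (Hdot : dot d (p * cb_c i, p * cb_s i) = p * p).
  { unfold dot; simpl. pose proof (dot_bis i d Hi) as E. fold p in E.
    transitivity (p * (fst d * cb_c i + snd d * cb_s i)).
    - unfold d, vsub. simpl. ring.
    - rewrite E. ring. }
  assert (Hnm : norm (p * cb_c i, p * cb_s i) = p).
  { unfold norm, dot; simpl.
    replace (p * cb_c i * (p * cb_c i) + p * cb_s i * (p * cb_s i)) with (p * p * (cb_c i * cb_c i + cb_s i * cb_s i)) by ring.
    rewrite (cb_unit i Hi), Rmult_1_r. apply sqrt_square; lra. }
  fold d. fold N. rewrite Hdot, Hnm, HN.
  replace (p * p / (N * p)) with (p / N) by (field; lra).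
  assert (Hc : -1 <= p / N <= 1).
  { split; apply (Rmult_le_reg_r N); try lra; replace (p / N * N) with p by (field; lra); lra. }
  rewrite (cos_acos _ Hc), (sin_acos _ Hc).
  set (Y := sqrt (1 - (p / N)²)).
  assert (HY0 : 0 <= Y) by apply sqrt_pos.
  assert (HYY : Y * Y = 1 - (p/N)²).
  { apply sqrt_sqrt. unfold Rsqr. replace (p / N * (p / N)) with ((p*p)/(N*N)) by (field; lra).
    assert (p*p / (N*N) <= 1) by (apply (Rmult_le_reg_r (N*N)); [nra|]; replace (p*p/(N*N)*(N*N)) with (p*p) by (field; lra); nra). lra. }
  assert (HZZ : (sqrt 3 * Y * N) * (sqrt 3 * Y * N) = (a - b) * (a - b)).
  { replace ((sqrt 3 * Y * N) * (sqrt 3 * Y * N)) with ((sqrt 3 * sqrt 3) * (Y * Y) * (N * N)) by ring.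
    rewrite H33, HYY. unfold Rsqr.
    replace (3 * (1 - p / N * (p / N)) * (N * N)) with (3 * (N * N - p * p)) by (field; lra).
    assert (Hpab : p = - a - b) by lra. clearbody p. subst p.
    ring_simplify. ring_simplify in HNN. lra. }
  assert (HZ0 : 0 <= sqrt 3 * Y * N) by (apply Rmult_le_pos; [apply Rmult_le_pos; lra|lra]).
  assert (Hba : b - a <= sqrt 3 * Y * N) by nra.
  apply (Rmult_le_reg_r (sqrt 3)); [lra|].
  replace ((sqrt 3 * (p / N) + Y) * N * sqrt 3) with (sqrt 3 * sqrt 3 * p + sqrt 3 * Y * N) by (field; lra).
  rewrite H33. fold p a in Hlen. lra.
Qed.

Lemma finish P i k l u w : general_position P -> perm3 i k l -> In u P -> inC i u w ->
  PathJ P i k u w ->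
  let alpha := angle u w (tri_mid i u w) in
    exists l : list pt,
      is_path (half_theta6_adj P) u l w /\
      in_canon_tri i u w u /\
      (forall x, In x l -> in_canon_tri i u w x) /\
      path_length u l <= (sqrt 3 * cos alpha + sin alpha) * edist u w.
Proof.
  intros HG Hp Hu HC [lst [Hpath [Hin Hlen]]] alpha.
  assert (Hi : (i < 3)%nat) by (destruct Hp; lia).
  exists lst. split; [exact Hpath|]. split; [left; reflexivity|]. split.
  - intros x Hx. destruct (classic (x = u)) as [->|Hne]; [left; reflexivity|right].
    pose proof (path_inP P u lst w x Hpath Hx) as HxP.
    pose proof (inT_gp P i u w x HG Hu HxP Hne (Hin x Hx)) as HCx.
    destruct (cone_bwd i u x Hi HCx) as [_ [r [t [Hr [Ht Hxe]]]]].
    exists r, t. split; [exact Hr|]. split; [lra|]. split; [exact Hxe|].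
    rewrite !proj_sc by exact Hi. exact (proj2 (Hin x Hx)).
  - exact (final_len i k l u w lst Hp HC Hlen).
Qed.

Theorem theorem1 :
  forall (P : list pt) (u w : pt) (i : nat),
    general_position P ->
    In u P -> In w P ->
    in_pos_cone i u w ->
    let alpha := angle u w (tri_mid i u w) in
    exists l : list pt,
      is_path (half_theta6_adj P) u l w /\
      in_canon_tri i u w u /\
      (forall x, In x l -> in_canon_tri i u w x) /\
      path_length u l <= (sqrt 3 * cos alpha + sin alpha) * edist u w.
Proof.
  intros P u w i HG Hu Hw Hcone.
  destruct (cone_fwd i u w Hcone) as [Hi HC].
  assert (Hex : exists k l, perm3 i k l).
  { destruct i as [|[|[|i]]]; try lia.
    - exists 1%nat, 2%nat; unfold perm3; lia.
    - exists 0%nat, 2%nat; unfold perm3; lia.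
    - exists 0%nat, 1%nat; unfold perm3; lia. }
  destruct Hex as [k [l Hp]].
  destruct (lemA P HG _ u w i k l Hp Hu Hw HC (le_n _)) as [HP|HP].
  - exact (finish P i k l u w HG Hp Hu HC HP).
  - exact (finish P i l k u w HG (perm3_swap2 _ _ _ Hp) Hu HC HP).
Qed.
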